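(* Let $z_1(t),\dots,z_4(t)$ solve the system of Theorem 5.2 and let $u(t)>0$ satisfy $\dot u=2\big(|z_1|^2+|z_2|^2+|z_3|^2+|z_4|^2\big)u$. Then each of the quantities $$|z_1|^2-|z_2|^2+|z_3|^2-|z_4|^2,\quad z_1\bar z_2+z_3\bar z_4,\quad \mathrm{Re}(z_1z_4-z_2z_3),\quad z_1\bar z_3+z_2\bar z_4$$ is a constant multiple of $u$; the quantity $Q(z_1,z_2,z_3,z_4)$ is a constant multiple of $u^2$; and $\mathrm{Im}(z_1z_4-z_2z_3)$ satisfies $\frac{d}{dt}\mathrm{Im}(z_1z_4-z_2z_3)=-2\big(\sum_j|z_j|^2\big)\mathrm{Im}(z_1z_4-z_2z_3)$, hence is a constant multiple of $u^{-1}$.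
   Context: The system of Theorem 5.2 is: $\dot z_1=z_1(|z_1|^2+|z_2|^2+|z_3|^2-|z_4|^2)+2(\overline{z_1z_4-z_2z_3}+z_2z_3)\bar z_4$, $\dot z_2=z_2(|z_4|^2+|z_1|^2+|z_2|^2-|z_3|^2)-2(\overline{z_1z_4-z_2z_3}-z_1z_4)\bar z_3$, $\dot z_3=z_3(|z_3|^2+|z_4|^2+|z_1|^2-|z_2|^2)-2(\overline{z_1z_4-z_2z_3}-z_1z_4)\bar z_2$, $\dot z_4=z_4(|z_2|^2+|z_3|^2+|z_4|^2-|z_1|^2)+2(\overline{z_1z_4-z_2z_3}+z_2z_3)\bar z_1$. Define $Q(z_1,z_2,z_3,z_4)=(|z_1|^2-|z_2|^2+|z_3|^2-|z_4|^2)^2+4|z_1\bar z_2+z_3\bar z_4|^2=(|z_1|^2+|z_2|^2)^2+(|z_3|^2+|z_4|^2)^2+2|z_1\bar z_3+z_2\bar z_4|^2-2|z_1z_4-z_2z_3|^2$. *)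

(* Defs.v *)
From Stdlib Require Import Reals.
From Coquelicot Require Import Coquelicot.
Open Scope R_scope.

Definition nsq (z : C) : R := (Cmod z) ^ 2.

Definition Dz (z1 z2 z3 z4 : C) : C := (z1 * z4 - z2 * z3)%C.

(* Right-hand sides of the system of Theorem 5.2 *)
Definition F1 (z1 z2 z3 z4 : C) : C :=
  (z1 * RtoC (nsq z1 + nsq z2 + nsq z3 - nsq z4)
   + 2 * (Cconj (Dz z1 z2 z3 z4) + z2 * z3) * Cconj z4)%C.
Definition F2 (z1 z2 z3 z4 : C) : C :=
  (z2 * RtoC (nsq z4 + nsq z1 + nsq z2 - nsq z3)
   - 2 * (Cconj (Dz z1 z2 z3 z4) - z1 * z4) * Cconj z3)%C.
Definition F3 (z1 z2 z3 z4 : C) : C :=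
  (z3 * RtoC (nsq z3 + nsq z4 + nsq z1 - nsq z2)
   - 2 * (Cconj (Dz z1 z2 z3 z4) - z1 * z4) * Cconj z2)%C.
Definition F4 (z1 z2 z3 z4 : C) : C :=
  (z4 * RtoC (nsq z2 + nsq z3 + nsq z4 - nsq z1)
   + 2 * (Cconj (Dz z1 z2 z3 z4) + z2 * z3) * Cconj z1)%C.

(* Q, first expression in the paper's definition *)
Definition Qf (z1 z2 z3 z4 : C) : R :=
  (nsq z1 - nsq z2 + nsq z3 - nsq z4) ^ 2
  + 4 * nsq (z1 * Cconj z2 + z3 * Cconj z4)%C.

Definition inI (a b : Rbar) (t : R) : Prop := Rbar_lt a t /\ Rbar_lt t b.

(* Main.v *)
Require Import Defs.
From Stdlib Require Import Reals Lra Classical.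
From Coquelicot Require Import Coquelicot.
Open Scope R_scope.
Lemma Cmod2 a b : Cmod (a,b) ^ 2 = a^2 + b^2.
Proof. unfold Cmod. simpl fst; simpl snd. rewrite pow2_sqrt; [ring|nra]. Qed.

Lemma Dq (f : R -> R) t l : is_derive f t l -> Derive (fun x : R => f x) t = l.
Proof. intros H. apply is_derive_unique. exact H. Qed.

Ltac fin H1 H2 H3 H4 H5 H6 H7 H8 Hu Hu0 p1 p2 p3 p4 S :=
  auto_derive;
  [ repeat split; try (eexists; eassumption); try exact Hu0
  | rewrite (Dq _ _ _ H1), (Dq _ _ _ H2), (Dq _ _ _ H3), (Dq _ _ _ H4),
      (Dq _ _ _ H5), (Dq _ _ _ H6), (Dq _ _ _ H7), (Dq _ _ _ H8), ?(Dq _ _ _ Hu);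
    subst p1 p2 p3 p4 S; unfold F1, F2, F3, F4, Dz, nsq; rewrite !Cmod2;
    simpl; field; try exact Hu0 ].

Lemma core (x1 y1 x2 y2 x3 y3 x4 y4 u : R -> R) t :
  let p1 := (x1 t, y1 t) in let p2 := (x2 t, y2 t) in
  let p3 := (x3 t, y3 t) in let p4 := (x4 t, y4 t) in
  let S := x1 t^2 + y1 t^2 + x2 t^2 + y2 t^2 + x3 t^2 + y3 t^2 + x4 t^2 + y4 t^2 in
  is_derive x1 t (fst (F1 p1 p2 p3 p4)) -> is_derive y1 t (snd (F1 p1 p2 p3 p4)) ->
  is_derive x2 t (fst (F2 p1 p2 p3 p4)) -> is_derive y2 t (snd (F2 p1 p2 p3 p4)) ->
  is_derive x3 t (fst (F3 p1 p2 p3 p4)) -> is_derive y3 t (snd (F3 p1 p2 p3 p4)) ->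
  is_derive x4 t (fst (F4 p1 p2 p3 p4)) -> is_derive y4 t (snd (F4 p1 p2 p3 p4)) ->
  is_derive u t (2 * S * u t) -> u t <> 0 ->
  is_derive (fun s => (x1 s^2 + y1 s^2 - (x2 s^2 + y2 s^2) + (x3 s^2 + y3 s^2) - (x4 s^2 + y4 s^2)) / u s) t 0 /\
  is_derive (fun s => (x1 s * x2 s + y1 s * y2 s + (x3 s * x4 s + y3 s * y4 s)) / u s) t 0 /\
  is_derive (fun s => (y1 s * x2 s - x1 s * y2 s + (y3 s * x4 s - x3 s * y4 s)) / u s) t 0 /\
  is_derive (fun s => (x1 s * x4 s - y1 s * y4 s - (x2 s * x3 s - y2 s * y3 s)) / u s) t 0 /\
  is_derive (fun s => (x1 s * x3 s + y1 s * y3 s + (x2 s * x4 s + y2 s * y4 s)) / u s) t 0 /\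
  is_derive (fun s => (y1 s * x3 s - x1 s * y3 s + (y2 s * x4 s - x2 s * y4 s)) / u s) t 0 /\
  is_derive (fun s => (x1 s * y4 s + y1 s * x4 s - (x2 s * y3 s + y2 s * x3 s)) * u s) t 0 /\
  is_derive (fun s => (x1 s * y4 s + y1 s * x4 s - (x2 s * y3 s + y2 s * x3 s))) t
     (-2 * S * (x1 t * y4 t + y1 t * x4 t - (x2 t * y3 t + y2 t * x3 t))).
Proof.
  intros p1 p2 p3 p4 S H1 H2 H3 H4 H5 H6 H7 H8 Hu Hu0.
  do 7 (split; [fin H1 H2 H3 H4 H5 H6 H7 H8 Hu Hu0 p1 p2 p3 p4 S|]). fin H1 H2 H3 H4 H5 H6 H7 H8 Hu Hu0 p1 p2 p3 p4 S.
Qed.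

Lemma dfst (z:R->C) t v : is_derive z t v -> is_derive (fun s => fst (z s)) t (fst v).
Proof. intros H. unfold is_derive.
  pose proof (filterdiff_comp z (fun p : R*R => fst p) _ _ H (filterdiff_linear _ is_linear_fst)) as H2.
  exact H2. Qed.
Lemma dsnd (z:R->C) t v : is_derive z t v -> is_derive (fun s => snd (z s)) t (snd v).
Proof. intros H. unfold is_derive.
  pose proof (filterdiff_comp z (fun p : R*R => snd p) _ _ H (filterdiff_linear _ is_linear_snd)) as H2.
  exact H2. Qed.

Lemma nsq_eq z : nsq z = fst z ^ 2 + snd z ^ 2.
Proof. destruct z as [a b]. unfold nsq. apply Cmod2. Qed.

Lemma between a b t0 t1 s : inI a b t0 -> inI a b t1 -> t0 <= s <= t1 -> inI a b s.
Proof.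
  intros [A0 B0] [A1 B1] Hs. split.
  - apply Rbar_lt_le_trans with t0; [exact A0|simpl; lra].
  - apply Rbar_le_lt_trans with t1; [simpl; lra|exact B1].
Qed.

Lemma const (a b : Rbar) (g : R -> R) :
  (forall t, inI a b t -> is_derive g t 0) -> exists c, forall t, inI a b t -> g t = c.
Proof.
  intros H. destruct (classic (exists t0, inI a b t0)) as [[t0 H0]|N].
  - exists (g t0). intros t Ht. destruct (Rtotal_order t t0) as [Hl|[He|Hg]].
    + apply (eq_is_derive g t t0); [|exact Hl].
      intros s Hs. apply H. apply (between a b t t0 s); auto.
    + subst; reflexivity.
    + symmetry. apply (eq_is_derive g t0 t); [|exact Hg].
      intros s Hs. apply H. apply (between a b t0 t s); auto.
  - exists 0. intros t Ht. exfalso. apply N. eauto.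
Qed.

Lemma at_t (z1 z2 z3 z4 : R -> C) (u : R -> R) t :
  is_derive z1 t (F1 (z1 t) (z2 t) (z3 t) (z4 t)) ->
  is_derive z2 t (F2 (z1 t) (z2 t) (z3 t) (z4 t)) ->
  is_derive z3 t (F3 (z1 t) (z2 t) (z3 t) (z4 t)) ->
  is_derive z4 t (F4 (z1 t) (z2 t) (z3 t) (z4 t)) ->
  0 < u t ->
  is_derive u t (2 * (nsq (z1 t) + nsq (z2 t) + nsq (z3 t) + nsq (z4 t)) * u t) ->
  let x1 := fun s => fst (z1 s) in let y1 := fun s => snd (z1 s) in
  let x2 := fun s => fst (z2 s) in let y2 := fun s => snd (z2 s) in
  let x3 := fun s => fst (z3 s) in let y3 := fun s => snd (z3 s) in
  let x4 := fun s => fst (z4 s) in let y4 := fun s => snd (z4 s) in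
  let S := x1 t^2 + y1 t^2 + x2 t^2 + y2 t^2 + x3 t^2 + y3 t^2 + x4 t^2 + y4 t^2 in
  is_derive (fun s => (x1 s^2 + y1 s^2 - (x2 s^2 + y2 s^2) + (x3 s^2 + y3 s^2) - (x4 s^2 + y4 s^2)) / u s) t 0 /\
  is_derive (fun s => (x1 s * x2 s + y1 s * y2 s + (x3 s * x4 s + y3 s * y4 s)) / u s) t 0 /\
  is_derive (fun s => (y1 s * x2 s - x1 s * y2 s + (y3 s * x4 s - x3 s * y4 s)) / u s) t 0 /\
  is_derive (fun s => (x1 s * x4 s - y1 s * y4 s - (x2 s * x3 s - y2 s * y3 s)) / u s) t 0 /\
  is_derive (fun s => (x1 s * x3 s + y1 s * y3 s + (x2 s * x4 s + y2 s * y4 s)) / u s) t 0 /\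
  is_derive (fun s => (y1 s * x3 s - x1 s * y3 s + (y2 s * x4 s - x2 s * y4 s)) / u s) t 0 /\
  is_derive (fun s => (x1 s * y4 s + y1 s * x4 s - (x2 s * y3 s + y2 s * x3 s)) * u s) t 0 /\
  is_derive (fun s => (x1 s * y4 s + y1 s * x4 s - (x2 s * y3 s + y2 s * x3 s))) t
     (-2 * S * (x1 t * y4 t + y1 t * x4 t - (x2 t * y3 t + y2 t * x3 t))).
Proof.
  intros D1 D2 D3 D4 Hu0 Hu x1 y1 x2 y2 x3 y3 x4 y4 S.
  rewrite (surjective_pairing (z1 t)), (surjective_pairing (z2 t)),
    (surjective_pairing (z3 t)), (surjective_pairing (z4 t)) in D1, D2, D3, D4.
  rewrite !nsq_eq in Hu.
  apply (core x1 y1 x2 y2 x3 y3 x4 y4 u t).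
  - exact (dfst _ _ _ D1).
  - exact (dsnd _ _ _ D1).
  - exact (dfst _ _ _ D2).
  - exact (dsnd _ _ _ D2).
  - exact (dfst _ _ _ D3).
  - exact (dsnd _ _ _ D3).
  - exact (dfst _ _ _ D4).
  - exact (dsnd _ _ _ D4).
  - subst S x1 y1 x2 y2 x3 y3 x4 y4. cbv beta.
    replace (2 * (fst (z1 t) ^ 2 + snd (z1 t) ^ 2 + fst (z2 t) ^ 2 + snd (z2 t) ^ 2 +
         fst (z3 t) ^ 2 + snd (z3 t) ^ 2 + fst (z4 t) ^ 2 + snd (z4 t) ^ 2) * u t)
    with (2 * (fst (z1 t) ^ 2 + snd (z1 t) ^ 2 + (fst (z2 t) ^ 2 + snd (z2 t) ^ 2) +
         (fst (z3 t) ^ 2 + snd (z3 t) ^ 2) + (fst (z4 t) ^ 2 + snd (z4 t) ^ 2)) * u t) by ring.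
    exact Hu.
  - lra.
Qed.

Theorem mainTheorem9 (a b : Rbar) (z1 z2 z3 z4 : R -> C) (u : R -> R) :
  Rbar_lt a b ->
  (forall t, inI a b t ->
     is_derive z1 t (F1 (z1 t) (z2 t) (z3 t) (z4 t)) /\
     is_derive z2 t (F2 (z1 t) (z2 t) (z3 t) (z4 t)) /\
     is_derive z3 t (F3 (z1 t) (z2 t) (z3 t) (z4 t)) /\
     is_derive z4 t (F4 (z1 t) (z2 t) (z3 t) (z4 t))) ->
  (forall t, inI a b t -> 0 < u t) ->
  (forall t, inI a b t ->
     is_derive u t (2 * (nsq (z1 t) + nsq (z2 t) + nsq (z3 t) + nsq (z4 t)) * u t)) ->
  (exists c : R, forall t, inI a b t ->
     nsq (z1 t) - nsq (z2 t) + nsq (z3 t) - nsq (z4 t) = c * u t) /\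
  (exists c : C, forall t, inI a b t ->
     (z1 t * Cconj (z2 t) + z3 t * Cconj (z4 t))%C = (c * RtoC (u t))%C) /\
  (exists c : R, forall t, inI a b t ->
     Re (Dz (z1 t) (z2 t) (z3 t) (z4 t)) = c * u t) /\
  (exists c : C, forall t, inI a b t ->
     (z1 t * Cconj (z3 t) + z2 t * Cconj (z4 t))%C = (c * RtoC (u t))%C) /\
  (exists c : R, forall t, inI a b t ->
     Qf (z1 t) (z2 t) (z3 t) (z4 t) = c * (u t) ^ 2) /\
  (forall t, inI a b t ->
     is_derive (fun s => Im (Dz (z1 s) (z2 s) (z3 s) (z4 s))) t
       (-2 * (nsq (z1 t) + nsq (z2 t) + nsq (z3 t) + nsq (z4 t))
           * Im (Dz (z1 t) (z2 t) (z3 t) (z4 t)))) /\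
  (exists c : R, forall t, inI a b t ->
     Im (Dz (z1 t) (z2 t) (z3 t) (z4 t)) = c / u t).

Proof.
  intros Hab HD Hpos Hu.
  assert (K : forall t, inI a b t -> _) by
    (intros t Ht; destruct (HD t Ht) as (D1 & D2 & D3 & D4);
     pose proof (at_t z1 z2 z3 z4 u t D1 D2 D3 D4 (Hpos t Ht) (Hu t Ht)) as X; cbv zeta in X; exact X).
  destruct (const a b _ (fun t Ht => proj1 (K t Ht))) as [cA HA].
  destruct (const a b _ (fun t Ht => proj1 (proj2 (K t Ht)))) as [cB1 HB1].
  destruct (const a b _ (fun t Ht => proj1 (proj2 (proj2 (K t Ht))))) as [cB2 HB2].
  destruct (const a b _ (fun t Ht => proj1 (proj2 (proj2 (proj2 (K t Ht)))))) as [cD HD1].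
  destruct (const a b _ (fun t Ht => proj1 (proj2 (proj2 (proj2 (proj2 (K t Ht))))))) as [cC1 HC1].
  destruct (const a b _ (fun t Ht => proj1 (proj2 (proj2 (proj2 (proj2 (proj2 (K t Ht)))))))) as [cC2 HC2].
  destruct (const a b _ (fun t Ht => proj1 (proj2 (proj2 (proj2 (proj2 (proj2 (proj2 (K t Ht))))))))) as [cI HI].
  assert (PA : forall t, inI a b t ->
     nsq (z1 t) - nsq (z2 t) + nsq (z3 t) - nsq (z4 t) = cA * u t).
  { intros t Ht. specialize (HA t Ht). specialize (Hpos t Ht). cbv beta in HA.
    rewrite !nsq_eq, <- HA. field. lra. }
  assert (PB : forall t, inI a b t ->
     (z1 t * Cconj (z2 t) + z3 t * Cconj (z4 t))%C = ((cB1, cB2) * RtoC (u t))%C).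
  { intros t Ht. specialize (HB1 t Ht). specialize (HB2 t Ht). specialize (Hpos t Ht).
    cbv beta in HB1, HB2. apply injective_projections; simpl.
    - rewrite <- HB1. field. lra.
    - rewrite <- HB2. field. lra. }
  split; [exists cA; exact PA|].
  split; [exists (cB1, cB2); exact PB|].
  split.
  { exists cD. intros t Ht. specialize (HD1 t Ht). specialize (Hpos t Ht). cbv beta in HD1.
    unfold Dz, Re. simpl. rewrite <- HD1. field. lra. }
  split.
  { exists (cC1, cC2). intros t Ht. specialize (HC1 t Ht). specialize (HC2 t Ht).
    specialize (Hpos t Ht). cbv beta in HC1, HC2. apply injective_projections; simpl.
    - rewrite <- HC1. field. lra.
    - rewrite <- HC2. field. lra. }
  split.
  { exists (cA ^ 2 + 4 * (cB1 ^ 2 + cB2 ^ 2)). intros t Ht. unfold Qf.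
    rewrite (PA t Ht), (PB t Ht). rewrite nsq_eq. simpl. ring. }
  split.
  { intros t Ht. pose proof (proj2 (proj2 (proj2 (proj2 (proj2 (proj2 (proj2 (K t Ht)))))))) as E.
    cbv beta zeta in E.
    match goal with |- is_derive _ _ ?v => match type of E with is_derive _ _ ?w =>
      replace v with w by (unfold Dz, Im; rewrite !nsq_eq; simpl; ring) end end.
    eapply is_derive_ext; [|exact E].
    intros s. unfold Dz, Im. simpl. ring. }
  { exists cI. intros t Ht. specialize (HI t Ht). specialize (Hpos t Ht). cbv beta in HI.
    unfold Dz, Im. simpl. rewrite <- HI. field. lra. }
Qed.
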